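(* Let $\alpha\in\ell^2$. The following are equivalent: (i) $R_\alpha$ is a compact operator on $\ell^2$; (ii) $\mathcal{L}:=\lim_{n\to\infty}L([n,\infty))=0$; (iii) for every $\epsilon>0$, the associated $(\epsilon,L)$-sequence has finite length.
   Context: $\mathbb{N}=\{0,1,2,\dots\}$; $(R_\alpha f)(k)=\alpha_k\sum_{j=0}^kf(j)$. For a finite natural interval $I$: $\mu(I)=\sum_{k\in I}|\alpha_k|^2$, $\|f\|_{2,I}=(\sum_{k\in I}|f(k)|^2)^{1/2}$, $l(I,f)=\sum_{k\in I}\sum_{n\in I\setminus\{k\}}|\alpha_k\alpha_n\sum_{j=\min(k,n)+1}^{\max(k,n)}f(j)|^2$, $L(I)=(\sup_{\|f\|_{2,I}\le1}l(I,f)/\mu(I))^{1/2}$ (sup over $f$ supported in $I$; $L(I)=0$ if $\alpha$ vanishes on $I$); $L([a,\infty))=\sup_{b\ge a}L([a,b])$ (so $\mathcal L\in[0,\infty]$ is the limit of a nonincreasing sequence). $(\epsilon,L)$-sequence: $c_0=0$, $c_{k+1}=\inf\{t\in\mathbb{N}:t>c_k,\ L([c_k,t-1])>\epsilon\}$ ($\inf\emptyset=+\infty$); it has finite length $N$ if $c_N<\infty$ and $c_{N+1}=+\infty$. *)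

(* Defs.v *)
From Stdlib Require Import Reals.
From Coquelicot Require Import Coquelicot.
Open Scope R_scope.

Definition in_l2 (f : nat -> C) : Prop := ex_series (fun k => (Cmod (f k)) ^ 2).

Definition l2norm (f : nat -> C) : R := sqrt (Series (fun k => (Cmod (f k)) ^ 2)).

Definition Ralpha (alpha : nat -> C) (f : nat -> C) : nat -> C :=
  fun k => Cmult (alpha k) (sum_n f k).

(* Compact operator on l^2: T maps l^2 into l^2 and maps bounded sets of l^2
   to relatively compact sets of l^2 (sequential form: every bounded sequence
   has an image subsequence converging in l^2). *)
Definition compact_l2_operator (T : (nat -> C) -> (nat -> C)) : Prop :=
  (forall f, in_l2 f -> in_l2 (T f)) /\
  (forall (fs : nat -> nat -> C) (M : R),
     (forall n, in_l2 (fs n) /\ l2norm (fs n) <= M) ->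
     exists (phi : nat -> nat) (g : nat -> C),
       (forall n, (phi n < phi (S n))%nat) /\ in_l2 g /\
       is_lim_seq (fun n => l2norm (fun k => Cminus (T (fs (phi n)) k) (g k))) 0).

Definition mu (alpha : nat -> C) (a b : nat) : R :=
  sum_n_m (fun k => (Cmod (alpha k)) ^ 2) a b.

Definition norm2I (f : nat -> C) (a b : nat) : R :=
  sqrt (sum_n_m (fun k => (Cmod (f k)) ^ 2) a b).

Definition supported_in (f : nat -> C) (a b : nat) : Prop :=
  forall k, (k < a \/ b < k)%nat -> f k = 0%C.

Definition lIf (alpha : nat -> C) (a b : nat) (f : nat -> C) : R :=
  sum_n_m (fun k =>
    sum_n_m (fun n =>
      if Nat.eqb n k then 0
      else (Cmod (Cmult (Cmult (alpha k) (alpha n))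
                  (sum_n_m f (S (Nat.min k n)) (Nat.max k n)))) ^ 2) a b) a b.

(* The supremum is finite (finite-dimensional problem), so taking its real
   part is harmless. *)
Definition LI (alpha : nat -> C) (a b : nat) : R :=
  if Req_EM_T (mu alpha a b) 0 then 0
  else sqrt (real (Lub_Rbar (fun x => exists f : nat -> C,
              supported_in f a b /\ norm2I f a b <= 1 /\
              x = lIf alpha a b f / mu alpha a b))).

Definition Lray (alpha : nat -> C) (a : nat) : Rbar :=
  Lub_Rbar (fun x => exists b : nat, (a <= b)%nat /\ x = LI alpha a b).

Definition Lcal_is_zero (alpha : nat -> C) : Prop :=
  forall eps : R, 0 < eps ->
    exists N : nat, forall n : nat, (N <= n)%nat -> Rbar_lt (Lray alpha n) (Finite eps).

(* o = inf { t : nat | P t } in N u {+oo}, with None = +oo and inf(empty) = +oo. *)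
Definition is_inf_nat_opt (P : nat -> Prop) (o : option nat) : Prop :=
  match o with
  | None => forall t, ~ P t
  | Some t => P t /\ forall t', P t' -> (t <= t')%nat
  end.

Definition is_eps_L_sequence (alpha : nat -> C) (eps : R) (c : nat -> option nat) : Prop :=
  c 0%nat = Some 0%nat /\
  forall k : nat,
    match c k with
    | None => c (S k) = None
    | Some m => is_inf_nat_opt (fun t => (m < t)%nat /\ LI alpha m (t - 1) > eps) (c (S k))
    end.

Definition has_finite_length (c : nat -> option nat) : Prop :=
  exists N : nat, c N <> None /\ c (S N) = None.

(* Main.v *)
Require Import Defs.
From Stdlib Require Import Reals.
From Coquelicot Require Import Coquelicot.
From Stdlib Require Import Lra Lia Psatz Arith ClassicalEpsilon Classical.
Open Scope R_scope.


Lemma sR_ind (P : nat -> Prop) n :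
  P n -> (forall m, (n <= m)%nat -> P m -> P (S m)) -> forall m, (n <= m)%nat -> P m.
Proof.
  intros H0 HS m Hm. induction Hm; auto.
Qed.

Lemma sR_Sm (a : nat -> R) n m : (n <= S m)%nat ->
  sum_n_m a n (S m) = sum_n_m a n m + a (S m).
Proof. intros H. rewrite sum_n_Sm; auto. Qed.

Lemma sR_split (a : nat -> R) n m k : (n <= S m)%nat -> (m <= k)%nat ->
  sum_n_m a n k = sum_n_m a n m + sum_n_m a (S m) k.
Proof. intros. rewrite (sum_n_m_Chasles a n m k); auto. Qed.

Lemma sR_le_loc (a b : nat -> R) n m :
  (forall k, (n <= k <= m)%nat -> a k <= b k) -> sum_n_m a n m <= sum_n_m b n m.
Proof.
  intros H. destruct (le_lt_dec n m) as [Hnm|Hnm].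
  - revert H. pattern m. apply (sR_ind _ n); auto.
    + intros H. rewrite !sum_n_n. apply H; lia.
    + intros m' Hm' IH H. rewrite !sR_Sm by lia.
      apply Rplus_le_compat; [apply IH; intros; apply H; lia| apply H; lia].
  - rewrite !sum_n_m_zero by lia. apply Rle_refl.
Qed.

Lemma sR_nonneg (a : nat -> R) n m :
  (forall k, (n <= k <= m)%nat -> 0 <= a k) -> 0 <= sum_n_m a n m.
Proof.
  intros H. replace 0 with (sum_n_m (fun _ => 0) n m).
  - apply sR_le_loc; auto.
  - apply (sum_n_m_const_zero (G:=R_AbelianMonoid)).
Qed.

Lemma sR_sub (a : nat -> R) n m n' m' :
  (forall k, (n <= k <= m)%nat -> 0 <= a k) -> (n <= n')%nat -> (m' <= m)%nat ->
  sum_n_m a n' m' <= sum_n_m a n m.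
Proof.
  intros H H1 H2. destruct (le_lt_dec n' m') as [H3|H3].
  - rewrite (sR_split a n m' m) by lia.
    destruct n' as [|n''].
    + assert (n = 0)%nat by lia. subst.
      assert (0 <= sum_n_m a (S m') m) by (apply sR_nonneg; intros; apply H; lia). lra.
    + rewrite (sR_split a n n'' m') by lia.
      assert (0 <= sum_n_m a (S m') m) by (apply sR_nonneg; intros; apply H; lia).
      assert (0 <= sum_n_m a n n'') by (apply sR_nonneg; intros; apply H; lia). lra.
  - rewrite sum_n_m_zero by lia. apply sR_nonneg; auto.
Qed.

Lemma sR_term (a : nat -> R) n m k :
  (forall k, (n <= k <= m)%nat -> 0 <= a k) -> (n <= k <= m)%nat -> a k <= sum_n_m a n m.
Proof.
  intros H Hk. rewrite <- (sum_n_n a k). apply sR_sub; auto; lia.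
Qed.

Lemma sR_mult_l (c : R) (a : nat -> R) n m :
  sum_n_m (fun k => c * a k) n m = c * sum_n_m a n m.
Proof. apply (sum_n_m_mult_l (K:=R_Ring)). Qed.

Lemma sR_mult_r (c : R) (a : nat -> R) n m :
  sum_n_m (fun k => a k * c) n m = sum_n_m a n m * c.
Proof.
  rewrite (Rmult_comm _ c), <- sR_mult_l. apply sum_n_m_ext. intros k. apply Rmult_comm.
Qed.

Lemma sR_plus (a b : nat -> R) n m :
  sum_n_m (fun k => a k + b k) n m = sum_n_m a n m + sum_n_m b n m.
Proof. apply (sum_n_m_plus (G:=R_AbelianMonoid)). Qed.

Lemma sR_zero_ext (a : nat -> R) n m :
  (forall k, (n <= k <= m)%nat -> a k = 0) -> sum_n_m a n m = 0.
Proof.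
  intros H. rewrite (sum_n_m_ext_loc a (fun _ => 0)) by auto.
  apply (sum_n_m_const_zero (G:=R_AbelianMonoid)).
Qed.

Lemma sR_ext (a b : nat -> R) n m : (forall k, a k = b k) -> sum_n_m a n m = sum_n_m b n m.
Proof. intros H. apply sum_n_m_ext. exact H. Qed.

Lemma sR_ext_loc (a b : nat -> R) n m : (forall k, (n <= k <= m)%nat -> a k = b k) ->
  sum_n_m a n m = sum_n_m b n m.
Proof. intros H. apply sum_n_m_ext_loc. exact H. Qed.

Lemma Cmod_sq_plus (x y : C) : Cmod (x + y)%C ^ 2 <= 2 * Cmod x ^ 2 + 2 * Cmod y ^ 2.
Proof.
  pose proof (Cmod_triangle x y). pose proof (Cmod_ge_0 x). pose proof (Cmod_ge_0 y).
  pose proof (Cmod_ge_0 (x+y)%C).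
  set (c := Cmod (x+y)%C) in *. set (a := Cmod x) in *. set (b := Cmod y) in *.
  assert (c * c <= (a + b) * (a + b)) by (apply Rmult_le_compat; lra).
  assert (0 <= (a - b) * (a - b)) by (apply Rle_0_sqr). simpl. lra.
Qed.

Lemma Cmod_sq_minus (x y : C) : Cmod (x - y)%C ^ 2 <= 2 * Cmod x ^ 2 + 2 * Cmod y ^ 2.
Proof.
  unfold Cminus. pose proof (Cmod_sq_plus x (-y)%C). rewrite Cmod_opp in H. exact H.
Qed.

Lemma sq_nonneg (x : C) : 0 <= Cmod x ^ 2.
Proof. pose proof (Cmod_ge_0 x). nra. Qed.

Lemma sC_mult_l (c : C) (f : nat -> C) n m :
  sum_n_m (fun j => (c * f j)%C) n m = (c * sum_n_m f n m)%C.
Proof. apply (sum_n_m_mult_l (K:=C_Ring)). Qed.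

Lemma sC_zero_ext (f : nat -> C) n m :
  (forall k, (n <= k <= m)%nat -> f k = 0%C) -> sum_n_m f n m = RtoC 0.
Proof.
  intros H. transitivity (sum_n_m (G:=C_AbelianMonoid) (fun _ => zero) n m).
  apply sum_n_m_ext_loc. intros k Hk. rewrite H by auto. reflexivity.
  apply (sum_n_m_const_zero (G:=C_AbelianMonoid)).
Qed.

Lemma sC_split (a : nat -> C) n m k : (n <= S m)%nat -> (m <= k)%nat ->
  sum_n_m a n k = (sum_n_m a n m + sum_n_m a (S m) k)%C.
Proof. intros. rewrite (sum_n_m_Chasles a n m k); auto. Qed.

Lemma sC_norm (f : nat -> C) n m :
  Cmod (sum_n_m f n m) <= sum_n_m (fun j => Cmod (f j)) n m.
Proof.
  destruct (le_lt_dec n m) as [Hnm|Hnm].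
  - pattern m. apply (sR_ind _ n); auto.
    + rewrite !sum_n_n. apply Rle_refl.
    + intros m' Hm' IH. rewrite sR_Sm by lia. rewrite sum_n_Sm by lia.
      eapply Rle_trans. apply Cmod_triangle. apply Rplus_le_compat; auto. apply Rle_refl.
  - rewrite !sum_n_m_zero by lia. change (Cmod (0,0)%R <= 0).
    unfold Cmod; simpl. rewrite Rmult_0_l, Rplus_0_l, sqrt_0. apply Rle_refl.
Qed.

Definition wt (alpha : nat -> C) k := Cmod (alpha k) ^ 2.

Lemma wt_nonneg alpha k : 0 <= wt alpha k.
Proof. apply sq_nonneg. Qed.

Lemma mu_nonneg alpha a b : 0 <= mu alpha a b.
Proof. apply sR_nonneg. intros. apply sq_nonneg. Qed.

Definition Tt (alpha f : nat -> C) k n :=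
  if Nat.eqb n k then 0
  else (Cmod (Cmult (Cmult (alpha k) (alpha n))
                  (sum_n_m f (S (Nat.min k n)) (Nat.max k n)))) ^ 2.

Lemma lIf_Tt alpha a b f :
  lIf alpha a b f = sum_n_m (fun k => sum_n_m (fun n => Tt alpha f k n) a b) a b.
Proof. reflexivity. Qed.

Lemma Tt_nonneg alpha f k n : 0 <= Tt alpha f k n.
Proof. unfold Tt. destruct (Nat.eqb n k). lra. apply sq_nonneg. Qed.

Lemma Tt_neq alpha f k n : k <> n ->
  Tt alpha f k n = wt alpha k * wt alpha n * Cmod (sum_n_m f (S (Nat.min k n)) (Nat.max k n)) ^ 2.
Proof.
  intros H. unfold Tt. destruct (Nat.eqb_spec n k). lia.
  unfold wt. rewrite !Cmod_mult. ring.
Qed.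

Lemma lIf_nonneg alpha a b f : 0 <= lIf alpha a b f.
Proof.
  rewrite lIf_Tt. apply sR_nonneg; intros. apply sR_nonneg; intros. apply Tt_nonneg.
Qed.

Lemma lIf_sub alpha a a' b f : (a <= a')%nat -> lIf alpha a' b f <= lIf alpha a b f.
Proof.
  intros H. rewrite !lIf_Tt.
  eapply Rle_trans.
  - apply sR_le_loc. intros k Hk.
    apply (sR_sub (fun n => Tt alpha f k n) a b a' b); auto. intros; apply Tt_nonneg.
  - apply sR_sub; auto. intros. apply sR_nonneg. intros; apply Tt_nonneg.
Qed.

Lemma lIf_ext alpha a b f g : (forall j, (a <= j <= b)%nat -> f j = g j) ->
  lIf alpha a b f = lIf alpha a b g.
Proof.
  intros H. rewrite !lIf_Tt. apply sR_ext_loc. intros k Hk.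
  apply sum_n_m_ext_loc. intros n Hn. unfold Tt.
  rewrite (sum_n_m_ext_loc f g); auto.
  intros j Hj. apply H. split; [|lia].
  assert (Nat.min k n >= a)%nat by lia. lia.
Qed.

Lemma lIf_scale alpha a b f c :
  lIf alpha a b (fun j => (c * f j)%C) = Cmod c ^ 2 * lIf alpha a b f.
Proof.
  rewrite !lIf_Tt. rewrite <- sR_mult_l. apply sR_ext. intros k.
  rewrite <- sR_mult_l. apply sR_ext. intros n. unfold Tt.
  destruct (Nat.eqb n k). ring.
  rewrite sC_mult_l. rewrite !Cmod_mult. ring.
Qed.

Lemma mu_zero_wt alpha a b k : mu alpha a b = 0 -> (a <= k <= b)%nat -> wt alpha k = 0.
Proof.
  intros H Hk. pose proof (sR_term (fun k => Cmod (alpha k) ^ 2) a b k).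
  unfold mu in H. assert (wt alpha k <= 0).
  { unfold wt. rewrite <- H. apply H0; auto. intros; apply sq_nonneg. }
  pose proof (wt_nonneg alpha k). lra.
Qed.

Lemma lIf_mu_zero alpha a b f : mu alpha a b = 0 -> lIf alpha a b f = 0.
Proof.
  intros H. rewrite lIf_Tt. apply sR_zero_ext. intros k Hk. apply sR_zero_ext.
  intros n Hn. destruct (Nat.eq_dec k n). subst. unfold Tt. rewrite Nat.eqb_refl. auto.
  rewrite Tt_neq by auto. rewrite (mu_zero_wt alpha a b k); auto. ring.
Qed.

Lemma dsum_prod (u v : nat -> R) a b c d :
  sum_n_m (fun k => sum_n_m (fun n => u k * v n) c d) a b = sum_n_m u a b * sum_n_m v c d.
Proof.
  rewrite <- sR_mult_r. apply sR_ext. intros k. apply sR_mult_l.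
Qed.

Lemma lIf_bound alpha a b f : (forall j, Cmod (f j) <= 1) ->
  lIf alpha a b f <= mu alpha a b ^ 2 * INR (S b) ^ 2.
Proof.
  intros Hf. rewrite lIf_Tt.
  apply Rle_trans with (sum_n_m (fun k => sum_n_m (fun n => wt alpha k * (wt alpha n * INR (S b) ^ 2)) a b) a b).
  - apply sR_le_loc. intros k Hk. apply sR_le_loc. intros n Hn.
    destruct (Nat.eq_dec k n). subst. unfold Tt. rewrite Nat.eqb_refl.
    pose proof (wt_nonneg alpha n). pose proof (pos_INR (S b)). nra.
    rewrite Tt_neq by auto.
    assert (Cmod (sum_n_m f (S (Nat.min k n)) (Nat.max k n)) <= INR (S b)).
    { eapply Rle_trans. apply sC_norm.
      eapply Rle_trans. apply (sR_le_loc _ (fun _ => 1)). intros; auto.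
      rewrite sum_n_m_const. rewrite Rmult_1_r. apply le_INR. lia. }
    pose proof (Cmod_ge_0 (sum_n_m f (S (Nat.min k n)) (Nat.max k n))).
    pose proof (wt_nonneg alpha n). pose proof (wt_nonneg alpha k).
    assert (Cmod (sum_n_m f (S (Nat.min k n)) (Nat.max k n)) ^ 2 <= INR (S b) ^ 2) by nra.
    assert (0 <= wt alpha k * wt alpha n) by nra. nra.
  - rewrite dsum_prod. rewrite sR_mult_r. unfold mu. fold (wt alpha). 
    change (sum_n_m (fun k => Cmod (alpha k) ^ 2) a b) with (sum_n_m (wt alpha) a b). nra.
Qed.

Lemma C_aux1 (u v : C) : v = (u + v - u)%C.
Proof. ring. Qed.
Lemma C_aux2 (v : C) : (RtoC 0 + v)%C = v.
Proof. ring. Qed.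

Lemma mu_wt alpha a b : mu alpha a b = sum_n_m (wt alpha) a b.
Proof. reflexivity. Qed.

Lemma lIf_upper alpha a b f s : (s <= S a)%nat ->
  lIf alpha a b f <= 4 * mu alpha a b *
     sum_n_m (fun k => wt alpha k * Cmod (sum_n_m f s k) ^ 2) a b.
Proof.
  intros Hs. set (P := fun k => Cmod (sum_n_m f s k) ^ 2).
  rewrite lIf_Tt.
  apply Rle_trans with (sum_n_m (fun k => sum_n_m (fun n =>
      2 * ((wt alpha k * P k) * wt alpha n) + 2 * (wt alpha k * (wt alpha n * P n))) a b) a b).
  - apply sR_le_loc. intros k Hk. apply sR_le_loc. intros n Hn.
    pose proof (wt_nonneg alpha k). pose proof (wt_nonneg alpha n).
    assert (0 <= P k) by apply sq_nonneg. assert (0 <= P n) by apply sq_nonneg.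
    destruct (Nat.eq_dec k n) as [->|Hkn].
    + unfold Tt. rewrite Nat.eqb_refl. nra.
    + rewrite Tt_neq by auto.
      assert (Hsum : forall x y, (a <= x <= y)%nat ->
                 sum_n_m f (S x) y = (sum_n_m f s y - sum_n_m f s x)%C).
      { intros x y Hxy. rewrite (sC_split f s x y) by lia. apply C_aux1. }
      assert (Cmod (sum_n_m f (S (Nat.min k n)) (Nat.max k n)) ^ 2 <= 2 * P k + 2 * P n).
      { destruct (le_lt_dec k n).
        - rewrite Nat.min_l, Nat.max_r by lia. rewrite Hsum by lia.
          pose proof (Cmod_sq_minus (sum_n_m f s n) (sum_n_m f s k)). unfold P. lra.
        - rewrite Nat.min_r, Nat.max_l by lia. rewrite Hsum by lia.
          pose proof (Cmod_sq_minus (sum_n_m f s k) (sum_n_m f s n)). unfold P. lra. }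
      assert (0 <= wt alpha k * wt alpha n) by nra.
      apply Rle_trans with (wt alpha k * wt alpha n * (2 * P k + 2 * P n)).
      apply Rmult_le_compat_l; auto. nra.
  - rewrite (sR_ext_loc _ (fun k => sum_n_m (fun n => 2 * ((wt alpha k * P k) * wt alpha n)) a b
                                     + sum_n_m (fun n => 2 * (wt alpha k * (wt alpha n * P n))) a b)).
    2:{ intros. apply sR_plus. }
    rewrite sR_plus.
    rewrite (sR_ext _ (fun k => 2 * sum_n_m (fun n => (wt alpha k * P k) * wt alpha n) a b))
      by (intros; apply sR_mult_l).
    rewrite (sR_ext (fun k => sum_n_m (fun n => 2 * (wt alpha k * (wt alpha n * P n))) a b)
                    (fun k => 2 * sum_n_m (fun n => wt alpha k * (wt alpha n * P n)) a b))
      by (intros; apply sR_mult_l).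
    rewrite !sR_mult_l. rewrite !dsum_prod. rewrite mu_wt. 
    apply Req_le. unfold P. set (X := sum_n_m (fun k => wt alpha k * Cmod (sum_n_m f s k) ^ 2) a b). set (Y := sum_n_m (wt alpha) a b). lra.
Qed.

Lemma lIf_cross alpha N0 N b (g : nat -> C) : (N0 <= N)%nat ->
  (forall j, (S N0 <= j <= N)%nat -> g j = RtoC 0) ->
  2 * mu alpha N0 N * sum_n_m (fun n => wt alpha n * Cmod (sum_n_m g (S N) n) ^ 2) (S N) b
  <= lIf alpha N0 b g.
Proof.
  intros HN Hg. set (G := fun n => Cmod (sum_n_m g (S N) n) ^ 2).
  destruct (le_lt_dec b N) as [Hb|Hb].
  { rewrite sum_n_m_zero by lia. change (2 * mu alpha N0 N * 0 <= lIf alpha N0 b g).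
    rewrite Rmult_0_r. apply lIf_nonneg. }
  assert (Hz : forall x, (N0 <= x <= N)%nat -> sum_n_m g (S x) N = RtoC 0).
  { intros x Hx. apply sC_zero_ext. intros. apply Hg. lia. }
  assert (HG : forall x y, (N0 <= x <= N)%nat -> (S N <= y)%nat ->
            sum_n_m g (S x) y = sum_n_m g (S N) y).
  { intros x y Hx Hy. rewrite (sC_split g (S x) N y) by lia. rewrite Hz by lia. apply C_aux2. }
  rewrite lIf_Tt. rewrite (sR_split _ N0 N b) by lia.
  apply Rle_trans with (sum_n_m (fun k => sum_n_m (fun n => wt alpha k * (wt alpha n * G n)) (S N) b) N0 N
      + sum_n_m (fun k => sum_n_m (fun n => (wt alpha k * G k) * wt alpha n) N0 N) (S N) b).
  - rewrite !dsum_prod. rewrite mu_wt. apply Req_le. unfold G. cbv beta. lra.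
  - apply Rplus_le_compat.
    + apply sR_le_loc. intros k Hk.
      eapply Rle_trans.
      2:{ apply (sR_sub (fun n => Tt alpha g k n) N0 b (S N) b); try lia. intros; apply Tt_nonneg. }
      apply Req_le. apply sR_ext_loc. intros n Hn. rewrite Tt_neq by lia.
      rewrite Nat.min_l, Nat.max_r by lia. rewrite HG by lia. unfold G. ring.
    + apply sR_le_loc. intros k Hk.
      eapply Rle_trans.
      2:{ apply (sR_sub (fun n => Tt alpha g k n) N0 b N0 N); try lia. intros; apply Tt_nonneg. }
      apply Req_le. apply sR_ext_loc. intros n Hn. rewrite Tt_neq by lia.
      rewrite Nat.min_r, Nat.max_l by lia. rewrite HG by lia. unfold G. ring.
Qed.

Definition sq (f : nat -> C) k := Cmod (f k) ^ 2.

Lemma sq_nn f k : 0 <= sq f k.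
Proof. apply sq_nonneg. Qed.

Lemma Cmod_zero : Cmod (RtoC 0) = 0.
Proof. rewrite Cmod_R. apply Rabs_R0. Qed.

Lemma lIf_zero alpha a b : lIf alpha a b (fun _ => RtoC 0) = 0.
Proof.
  rewrite (lIf_ext alpha a b (fun _ => RtoC 0) (fun j => (RtoC 0 * (fun _ => RtoC 0) j)%C)).
  - rewrite lIf_scale. rewrite Cmod_zero. ring.
  - intros. simpl. ring.
Qed.

Lemma norm2I_sq f a b : norm2I f a b ^ 2 = sum_n_m (sq f) a b.
Proof.
  unfold norm2I. rewrite pow2_sqrt. reflexivity.
  apply sR_nonneg. intros. apply sq_nonneg.
Qed.

Lemma norm2I_le1 f a b : supported_in f a b -> norm2I f a b <= 1 -> forall j, Cmod (f j) <= 1.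
Proof.
  intros Hs Hn j.
  destruct (le_lt_dec a j); destruct (le_lt_dec j b).
  - assert (sum_n_m (sq f) a b <= 1).
    { rewrite <- norm2I_sq. unfold norm2I in *.
      pose proof (sqrt_pos (sum_n_m (fun k : nat => Cmod (f k) ^ 2) a b)). nra. }
    assert (sq f j <= 1).
    { eapply Rle_trans; [|exact H]. apply sR_term; auto. intros; apply sq_nn. }
    unfold sq in H0. pose proof (Cmod_ge_0 (f j)). nra.
  - rewrite Hs by lia. rewrite Cmod_zero. lra.
  - rewrite Hs by lia. rewrite Cmod_zero. lra.
  - rewrite Hs by lia. rewrite Cmod_zero. lra.
Qed.

Definition Eset alpha a b := fun x => exists f : nat -> C,
  supported_in f a b /\ norm2I f a b <= 1 /\ x = lIf alpha a b f / mu alpha a b.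

Lemma LI_spec alpha a b : mu alpha a b <> 0 ->
  exists r, LI alpha a b = sqrt r /\ 0 <= r /\
   (forall f, supported_in f a b -> norm2I f a b <= 1 -> lIf alpha a b f / mu alpha a b <= r) /\
   (forall y, (forall f, supported_in f a b -> norm2I f a b <= 1 ->
                lIf alpha a b f / mu alpha a b <= y) -> r <= y).
Proof.
  intros Hmu. pose proof (mu_nonneg alpha a b) as Hmu0.
  assert (Hmup : 0 < mu alpha a b) by lra.
  unfold LI. destruct (Req_EM_T (mu alpha a b) 0) as [E|_]; [contradiction|].
  fold (Eset alpha a b).
  pose proof (Lub_Rbar_correct (Eset alpha a b)) as [Hub Hlub].
  assert (Hbd : forall x, Eset alpha a b x -> x <= mu alpha a b * INR (S b) ^ 2).
  { intros x [f [Hs [Hn ->]]]. apply Rle_div_l; auto.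
    pose proof (lIf_bound alpha a b f (norm2I_le1 f a b Hs Hn)). nra. }
  assert (H0 : Eset alpha a b 0).
  { exists (fun _ => RtoC 0). split; [intros k _; reflexivity|]. split.
    - unfold norm2I. rewrite sR_zero_ext. rewrite sqrt_0; lra.
      intros. rewrite Cmod_zero. ring.
    - rewrite lIf_zero. unfold Rdiv. ring. }
  assert (Hl1 : Rbar_le (Lub_Rbar (Eset alpha a b)) (mu alpha a b * INR (S b) ^ 2)).
  { apply Hlub. intros x Hx. apply Hbd; auto. }
  assert (Hl2 : Rbar_le 0 (Lub_Rbar (Eset alpha a b))) by (apply Hub; auto).
  destruct (Lub_Rbar (Eset alpha a b)) as [r| |] eqn:El; simpl in Hl1, Hl2; try contradiction.
  exists r. split; [reflexivity|]. split; auto. split.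
  - intros f Hs Hn. assert (Rbar_le (lIf alpha a b f / mu alpha a b) (Finite r)).
    { apply Hub. exists f; auto. }
    simpl in H. auto.
  - intros y Hy. assert (Rbar_le (Finite r) (Finite y)).
    { apply Hlub. intros x [f [Hs [Hn ->]]]. simpl. apply Hy; auto. }
    simpl in H. auto.
Qed.

Lemma LI_nonneg alpha a b : 0 <= LI alpha a b.
Proof. unfold LI. destruct (Req_EM_T (mu alpha a b) 0). lra. apply sqrt_pos. Qed.

Lemma LI_upper alpha a b f : supported_in f a b ->
  lIf alpha a b f <= LI alpha a b ^ 2 * mu alpha a b * sum_n_m (sq f) a b.
Proof.
  intros Hs. pose proof (mu_nonneg alpha a b) as Hmu0.
  assert (HS0 : 0 <= sum_n_m (sq f) a b) by (apply sR_nonneg; intros; apply sq_nn).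
  assert (HL : 0 <= LI alpha a b ^ 2) by (pose proof (LI_nonneg alpha a b); nra).
  destruct (Req_EM_T (mu alpha a b) 0) as [E|Hmu].
  { rewrite lIf_mu_zero by auto. rewrite E. lra. }
  destruct (LI_spec alpha a b Hmu) as [r [Hr [Hr0 [H1 H2]]]].
  rewrite Hr. rewrite pow2_sqrt by auto.
  destruct (Req_EM_T (sum_n_m (sq f) a b) 0) as [Z|NZ].
  - rewrite (lIf_ext alpha a b f (fun _ => RtoC 0)).
    + rewrite lIf_zero. rewrite Z. lra.
    + intros j Hj. assert (sq f j <= 0).
      { rewrite <- Z. apply sR_term; auto. intros; apply sq_nn. }
      unfold sq in H. pose proof (Cmod_ge_0 (f j)).
      assert (Cmod (f j) = 0) by nra. apply Cmod_eq_0 in H3. auto.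
  - set (Sf := sum_n_m (sq f) a b) in *.
    assert (HSp : 0 < Sf) by lra.
    set (c := RtoC (/ sqrt Sf)).
    assert (Hc : Cmod c ^ 2 = / Sf).
    { unfold c. rewrite Cmod_R. rewrite pow2_abs. rewrite pow_inv.
      rewrite pow2_sqrt; lra. }
    assert (Hg1 : supported_in (fun j => (c * f j)%C) a b).
    { intros k Hk. simpl. rewrite Hs by auto. ring. }
    assert (Hg2 : norm2I (fun j => (c * f j)%C) a b <= 1).
    { unfold norm2I. rewrite (sR_ext _ (fun k => Cmod c ^ 2 * sq f k)).
      - rewrite sR_mult_l. fold Sf. rewrite Hc. rewrite Rinv_l by lra. rewrite sqrt_1. lra.
      - intros k. unfold sq. rewrite Cmod_mult. ring. }
    pose proof (H1 _ Hg1 Hg2). rewrite lIf_scale in H. rewrite Hc in H.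
    assert (Hmup : 0 < mu alpha a b) by lra.
    apply Rle_div_l in H; auto.
    assert (lIf alpha a b f = Sf * (/ Sf * lIf alpha a b f)) by (field; lra).
    rewrite H0. 
    assert (0 <= / Sf * lIf alpha a b f) by (pose proof (lIf_nonneg alpha a b f); apply Rmult_le_pos; auto; left; apply Rinv_0_lt_compat; auto).
    nra.
Qed.

Lemma LI_lower alpha a b e : 0 <= e -> e < LI alpha a b ->
  mu alpha a b <> 0 /\ exists f, supported_in f a b /\ norm2I f a b <= 1 /\
     e ^ 2 < lIf alpha a b f / mu alpha a b.
Proof.
  intros He HL.
  destruct (Req_EM_T (mu alpha a b) 0) as [E|Hmu].
  { unfold LI in HL. destruct (Req_EM_T (mu alpha a b) 0); [lra|contradiction]. }
  split; auto.
  destruct (LI_spec alpha a b Hmu) as [r [Hr [Hr0 [H1 H2]]]].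
  apply NNPP. intros Hno.
  assert (r <= e ^ 2).
  { apply H2. intros f Hs Hn. apply Rnot_lt_le. intros Hc. apply Hno. exists f; auto. }
  rewrite Hr in HL. assert (sqrt r <= sqrt (e ^ 2)) by (apply sqrt_le_1_alt; auto).
  rewrite sqrt_pow2 in H0 by auto. lra.
Qed.

Lemma LI_ge alpha a b f : mu alpha a b <> 0 -> supported_in f a b -> norm2I f a b <= 1 ->
  lIf alpha a b f / mu alpha a b <= LI alpha a b ^ 2.
Proof.
  intros Hmu Hs Hn. destruct (LI_spec alpha a b Hmu) as [r [Hr [Hr0 [H1 H2]]]].
  rewrite Hr, pow2_sqrt by auto. auto.
Qed.

Lemma Lray_ge alpha a b : (a <= b)%nat -> Rbar_le (LI alpha a b) (Lray alpha a).
Proof.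
  intros H. unfold Lray. pose proof (Lub_Rbar_correct
    (fun x => exists b : nat, (a <= b)%nat /\ x = LI alpha a b)) as [Hub _].
  apply Hub. exists b; auto.
Qed.

Lemma Lray_lt alpha a eta : Rbar_lt (Lray alpha a) (Finite eta) ->
  forall b, (a <= b)%nat -> LI alpha a b < eta.
Proof.
  intros H b Hb. pose proof (Lray_ge alpha a b Hb).
  destruct (Lray alpha a); simpl in *; try contradiction; lra.
Qed.

Lemma Lray_big alpha a e e' : ~ Rbar_lt (Lray alpha a) (Finite e) -> e' < e ->
  exists b, (a <= b)%nat /\ e' < LI alpha a b.
Proof.
  intros H He. apply NNPP. intros Hno. apply H.
  unfold Lray. pose proof (Lub_Rbar_correct
    (fun x => exists b : nat, (a <= b)%nat /\ x = LI alpha a b)) as [_ Hlub].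
  assert (Rbar_le (Lub_Rbar (fun x => exists b : nat, (a <= b)%nat /\ x = LI alpha a b)) (Finite e')).
  { apply Hlub. intros x [b [Hb ->]]. simpl. apply Rnot_lt_le. intros Hc. apply Hno. exists b; auto. }
  destruct (Lub_Rbar _); simpl in *; try contradiction; auto; lra.
Qed.

Lemma tail_bound alpha (Ha : in_l2 alpha) (HL : Lcal_is_zero alpha) eta (Heta : 0 < eta) :
  exists N, forall (f : nat -> C) K,
    sum_n_m (fun k => wt alpha k * Cmod (sum_n_m f (S N) k) ^ 2) (S N) K
    <= eta ^ 2 * sum_n_m (sq f) (S N) K.
Proof.
  destruct (HL eta Heta) as [N0 HN0].
  assert (HLI : forall b, (N0 <= b)%nat -> LI alpha N0 b < eta).
  { intros b Hb. apply (Lray_lt alpha N0); auto. }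
  assert (HRHS : forall f N K, 0 <= eta ^ 2 * sum_n_m (sq f) (S N) K).
  { intros. apply Rmult_le_pos. nra. apply sR_nonneg; intros; apply sq_nn. }
  destruct (classic (exists p, (N0 <= p)%nat /\ 0 < wt alpha p)) as [[p [Hp Hwp]]|Hno].
  2:{ exists N0. intros f K. eapply Rle_trans; [|apply HRHS].
      apply Req_le. apply sR_zero_ext. intros k Hk.
      assert (wt alpha k = 0).
      { pose proof (wt_nonneg alpha k). destruct H; auto. exfalso; apply Hno; exists k; split; auto; lia. }
      rewrite H. ring. }
  pose proof (Cauchy_ex_series _ Ha) as Hc.
  destruct (Hc (mkposreal _ Hwp)) as [N1 HN1]. simpl in HN1.
  exists (Nat.max p N1). set (N := Nat.max p N1). intros f K.
  destruct (le_lt_dec K N) as [HK|HK].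
  { rewrite sum_n_m_zero by lia. apply HRHS. }
  set (f' := fun j => if andb (Nat.leb (S N) j) (Nat.leb j K) then f j else RtoC 0).
  assert (Hf'1 : forall j, (S N <= j <= K)%nat -> f' j = f j).
  { intros j Hj. unfold f'. destruct (Nat.leb_spec (S N) j); destruct (Nat.leb_spec j K); simpl; auto; lia. }
  assert (Hf'0 : forall j, ~ (S N <= j <= K)%nat -> f' j = RtoC 0).
  { intros j Hj. unfold f'. destruct (Nat.leb_spec (S N) j); destruct (Nat.leb_spec j K); simpl; auto; lia. }
  assert (HN0N : (N0 <= N)%nat) by lia.
  pose proof (lIf_cross alpha N0 N K f' HN0N) as Hcross.
  rewrite (sR_ext_loc (fun n => wt alpha n * Cmod (sum_n_m f' (S N) n) ^ 2)
            (fun n => wt alpha n * Cmod (sum_n_m f (S N) n) ^ 2)) in Hcross.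
  2:{ intros n Hn. rewrite (sum_n_m_ext_loc f' f); auto. intros; apply Hf'1; lia. }
  assert (Hsupp : supported_in f' N0 K).
  { intros k Hk. apply Hf'0. lia. }
  pose proof (LI_upper alpha N0 K f' Hsupp) as Hup.
  assert (Hsq : sum_n_m (sq f') N0 K = sum_n_m (sq f) (S N) K).
  { rewrite (sR_split _ N0 N K) by lia.
    rewrite (sR_zero_ext (sq f') N0 N).
    - rewrite Rplus_0_l. apply sR_ext_loc. intros. unfold sq. rewrite Hf'1; auto.
    - intros. unfold sq. rewrite Hf'0 by lia. rewrite Cmod_zero. ring. }
  rewrite Hsq in Hup.
  assert (HmuN : wt alpha p <= mu alpha N0 N).
  { rewrite mu_wt. apply sR_term; try lia. intros; apply wt_nonneg. }
  assert (HmuK : mu alpha N0 K <= 2 * mu alpha N0 N).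
  { unfold mu. rewrite (sR_split _ N0 N K) by lia.
    assert (Habs : Rabs (sum_n_m (fun k => Cmod (alpha k) ^ 2) (S N) K) < wt alpha p).
    { apply HN1; lia. }
    apply Rabs_def2 in Habs. fold (mu alpha N0 N). lra. }
  assert (HL2 : LI alpha N0 K ^ 2 <= eta ^ 2).
  { pose proof (LI_nonneg alpha N0 K). pose proof (HLI K ltac:(lia)). nra. }
  set (X := sum_n_m (fun n => wt alpha n * Cmod (sum_n_m f (S N) n) ^ 2) (S N) K) in *.
  set (S' := sum_n_m (sq f) (S N) K) in *.
  assert (HS' : 0 <= S') by (apply sR_nonneg; intros; apply sq_nn).
  assert (Hmu0 : 0 <= mu alpha N0 K) by apply mu_nonneg.
  assert (Hcross' : 2 * mu alpha N0 N * X <= lIf alpha N0 K f').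
  { apply Hcross. intros j Hj. apply Hf'0. lia. }
  assert (H1 : LI alpha N0 K ^ 2 * mu alpha N0 K * S' <= eta ^ 2 * mu alpha N0 K * S').
  { apply Rmult_le_compat_r; auto. apply Rmult_le_compat_r; auto. }
  assert (H2 : eta ^ 2 * mu alpha N0 K * S' <= eta ^ 2 * (2 * mu alpha N0 N) * S').
  { apply Rmult_le_compat_r; auto. apply Rmult_le_compat_l; auto. nra. }
  assert (Hpos : 0 < 2 * mu alpha N0 N) by lra.
  assert (2 * mu alpha N0 N * X <= 2 * mu alpha N0 N * (eta ^ 2 * S')) by nra.
  apply Rmult_le_reg_l in H; auto.
Qed.

Lemma ser_lim (u : nat -> R) : ex_series u -> is_lim_seq (sum_n u) (Series u).
Proof. intros H. apply Series_correct in H. exact H. Qed.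

Lemma ser_partial_le (u : nat -> R) : (forall n, 0 <= u n) -> ex_series u ->
  forall N, sum_n u N <= Series u.
Proof.
  intros H0 H N. apply is_lim_seq_incr_compare. apply ser_lim; auto.
  intros n. unfold sum_n. rewrite sR_Sm by lia. specialize (H0 (S n)). lra.
Qed.

Lemma ser_bounded (u : nat -> R) B : (forall n, 0 <= u n) -> (forall N, sum_n u N <= B) ->
  ex_series u /\ Series u <= B.
Proof.
  intros H0 HB.
  assert (Hinc : forall n, sum_n u n <= sum_n u (S n)).
  { intros n. unfold sum_n. rewrite sR_Sm by lia. specialize (H0 (S n)). lra. }
  destruct (ex_finite_lim_seq_incr (sum_n u) B Hinc HB) as [l Hl].
  assert (Hs : is_series u l) by exact Hl.
  split. exists l; auto.
  rewrite (is_series_unique u l Hs).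
  assert (Rbar_le l B).
  { apply (is_lim_seq_le (sum_n u) (fun _ => B) l B); auto. apply is_lim_seq_const. }
  exact H.
Qed.

Lemma sq_sum_n_nonneg f K : 0 <= sum_n (sq f) K.
Proof. apply sR_nonneg. intros; apply sq_nn. Qed.

Lemma l2_partial f : in_l2 f -> forall N, sum_n (sq f) N <= l2norm f ^ 2.
Proof.
  intros H N. unfold l2norm. rewrite pow2_sqrt.
  - apply ser_partial_le; auto. intros; apply sq_nn.
  - eapply Rle_trans. apply (sq_sum_n_nonneg f 0). apply ser_partial_le; auto. intros; apply sq_nn.
Qed.

Lemma l2_of_bound f B : (forall N, sum_n (sq f) N <= B) -> in_l2 f /\ l2norm f <= sqrt B.
Proof.
  intros H. destruct (ser_bounded (sq f) B (sq_nn f) H) as [H1 H2].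
  split; auto. unfold l2norm. apply sqrt_le_1_alt. exact H2.
Qed.

Lemma l2norm_nonneg f : 0 <= l2norm f.
Proof. apply sqrt_pos. Qed.

Lemma pow2_le_inv x y : 0 <= x -> 0 <= y -> x ^ 2 <= y ^ 2 -> x <= y.
Proof. intros. apply Rsqr_incr_0; auto. rewrite !Rsqr_pow2. auto. Qed.

Lemma Cmod_le_l2 f k : in_l2 f -> Cmod (f k) <= l2norm f.
Proof.
  intros H. pose proof (l2_partial f H k).
  assert (sq f k <= sum_n (sq f) k) by (unfold sum_n; apply (sR_term (sq f) 0 k k); [intros; apply sq_nn|lia]).
  change (sq f k) with (Cmod (f k) ^ 2) in H1. apply pow2_le_inv. apply Cmod_ge_0. apply l2norm_nonneg. lra.
Qed.

Lemma sq_R alpha f k : sq (Ralpha alpha f) k = wt alpha k * Cmod (sum_n f k) ^ 2.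
Proof. unfold sq, Ralpha, wt. rewrite Cmod_mult. ring. Qed.

Definition W alpha := Series (wt alpha).

Lemma mu_le_W alpha (Ha : in_l2 alpha) a b : mu alpha a b <= W alpha.
Proof.
  eapply Rle_trans; [|apply (ser_partial_le (wt alpha) (wt_nonneg alpha) Ha b)].
  unfold sum_n. rewrite mu_wt. apply sR_sub; try lia. intros; apply wt_nonneg.
Qed.

Lemma W_nonneg alpha (Ha : in_l2 alpha) : 0 <= W alpha.
Proof. pose proof (mu_le_W alpha Ha 0 0). pose proof (mu_nonneg alpha 0 0). lra. Qed.

Lemma R_bound alpha (Ha : in_l2 alpha) (HL : Lcal_is_zero alpha) eta (Heta : 0 < eta) :
  exists N, forall (f : nat -> C) B, (forall K, sum_n (sq f) K <= B) ->
   forall K, sum_n (sq (Ralpha alpha f)) K <=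
     sum_n (sq (Ralpha alpha f)) N + 2 * Cmod (sum_n f N) ^ 2 * W alpha + 2 * eta ^ 2 * B.
Proof.
  destruct (tail_bound alpha Ha HL eta Heta) as [N HN].
  exists N. intros f B HB K.
  assert (HB0 : 0 <= B) by (eapply Rle_trans; [apply (sq_sum_n_nonneg f 0)|apply HB]).
  assert (HW := W_nonneg alpha Ha).
  assert (0 <= Cmod (sum_n f N) ^ 2) by apply sq_nonneg.
  destruct (le_lt_dec K N) as [HK|HK].
  { assert (sum_n (sq (Ralpha alpha f)) K <= sum_n (sq (Ralpha alpha f)) N).
    { unfold sum_n. apply sR_sub; auto. intros; apply sq_nn. }
    assert (0 <= eta ^ 2) by nra. nra. }
  unfold sum_n at 1. rewrite (sR_split _ 0 N K) by lia. fold (sum_n (sq (Ralpha alpha f)) N).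
  rewrite Rplus_assoc. apply Rplus_le_compat_l.
  apply Rle_trans with (sum_n_m (fun k => 2 * Cmod (sum_n f N) ^ 2 * wt alpha k
              + 2 * (wt alpha k * Cmod (sum_n_m f (S N) k) ^ 2)) (S N) K).
  - apply sR_le_loc. intros k Hk. rewrite sq_R.
    assert (sum_n f k = (sum_n f N + sum_n_m f (S N) k)%C).
    { unfold sum_n. apply sC_split; lia. }
    rewrite H0. pose proof (Cmod_sq_plus (sum_n f N) (sum_n_m f (S N) k)).
    pose proof (wt_nonneg alpha k). nra.
  - rewrite sR_plus. rewrite sR_mult_l. rewrite sR_mult_l.
    apply Rplus_le_compat.
    + apply Rmult_le_compat_l. nra. rewrite <- mu_wt. apply mu_le_W; auto.
    + specialize (HN f K).
      assert (sum_n_m (sq f) (S N) K <= B).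
      { eapply Rle_trans; [|apply (HB K)]. unfold sum_n. apply sR_sub; try lia. intros; apply sq_nn. }
      assert (0 <= eta ^ 2) by nra. nra.
Qed.

Lemma R_l2 alpha (Ha : in_l2 alpha) (HL : Lcal_is_zero alpha) f :
  in_l2 f -> in_l2 (Ralpha alpha f).
Proof.
  intros Hf. destruct (R_bound alpha Ha HL 1 Rlt_0_1) as [N HN].
  specialize (HN f _ (l2_partial f Hf)).
  eapply (l2_of_bound _ _ HN).
Qed.

Definition strict (s : nat -> nat) := forall n, (s n < s (S n))%nat.

Lemma strict_mono s : strict s -> forall a b, (a < b)%nat -> (s a < s b)%nat.
Proof.
  intros H a b Hab. induction Hab. apply H. specialize (H m). lia.
Qed.

Lemma strict_ge s : strict s -> forall n, (n <= s n)%nat.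
Proof. intros H n. induction n. lia. specialize (H n). lia. Qed.

Lemma strict_comp s t : strict s -> strict t -> strict (fun n => s (t n)).
Proof. intros Hs Ht n. apply strict_mono; auto. Qed.

Definition convR (u : nat -> R) l := forall eps, 0 < eps -> exists N, forall n, (N <= n)%nat -> Rabs (u n - l) < eps.
Definition convC (u : nat -> C) l := forall eps, 0 < eps -> exists N, forall n, (N <= n)%nat -> Cmod (u n - l)%C < eps.

Lemma inv_small eps : 0 < eps -> exists N, forall n, (N <= n)%nat -> / (INR n + 1) < eps.
Proof.
  intros He. destruct (archimed_cor1 eps He) as [N [H1 H2]]. exists N. intros n Hn.
  eapply Rle_lt_trans; [|exact H1]. apply Rinv_le_contravar.
  apply lt_0_INR; lia. apply le_INR in Hn. lra.
Qed.

Lemma BW_R (u : nat -> R) B : (forall n, Rabs (u n) <= B) ->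
  exists s, strict s /\ exists l, convR (fun n => u (s n)) l.
Proof.
  intros HB.
  destruct (Bolzano_Weierstrass u (fun c => -B <= c <= B) (compact_P3 (-B) B)) as [l Hl].
  { intros n. specialize (HB n). apply Rabs_le_between in HB. lra. }
  assert (Hp : forall N k, exists p, (N <= p)%nat /\ Rabs (u p - l) < / (INR k + 1)).
  { intros N k. assert (Hd : 0 < / (INR k + 1)).
    { apply Rinv_0_lt_compat. pose proof (pos_INR k). lra. }
    destruct (Hl (disc l (mkposreal _ Hd)) N) as [p [Hp1 Hp2]].
    - exists (mkposreal _ Hd). intros y Hy. exact Hy.
    - exists p. split; auto. }
  assert (Hc : forall N k, {p | (N <= p)%nat /\ Rabs (u p - l) < / (INR k + 1)}).
  { intros. apply constructive_indefinite_description. apply Hp. }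
  set (s := fix s n := match n with 0%nat => proj1_sig (Hc 0%nat 0%nat)
                                  | S m => proj1_sig (Hc (S (s m)) (S m)) end).
  assert (Hs1 : forall n, Rabs (u (s n) - l) < / (INR n + 1)).
  { intros [|n]; simpl; [apply (proj2_sig (Hc 0%nat 0%nat))|apply (proj2_sig (Hc _ (S n)))]. }
  exists s. split.
  - intros n. exact (proj1 (proj2_sig (Hc (S (s n)) (S n)))).
  - exists l. intros eps He. destruct (inv_small eps He) as [N HN]. exists N. intros n Hn.
    eapply Rlt_trans. apply Hs1. apply HN; auto.
Qed.

Lemma Cmod_le_parts (z : C) : Cmod z <= Rabs (fst z) + Rabs (snd z).
Proof.
  destruct z as [a b]. unfold Cmod. simpl.
  pose proof (Rabs_pos a). pose proof (Rabs_pos b).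
  rewrite <- (sqrt_pow2 (Rabs a + Rabs b)) by lra.
  apply sqrt_le_1_alt. pose proof (Rsqr_abs a). pose proof (Rsqr_abs b). unfold Rsqr in *. nra.
Qed.

Lemma im_le_Cmod' (z : C) : Rabs (snd z) <= Cmod z.
Proof.
  destruct z as [a b]. unfold Cmod. simpl. rewrite <- sqrt_Rsqr_abs.
  apply sqrt_le_1_alt. unfold Rsqr. nra.
Qed.

Lemma BW_C (u : nat -> C) B : (forall n, Cmod (u n) <= B) ->
  exists s, strict s /\ exists l, convC (fun n => u (s n)) l.
Proof.
  intros HB.
  destruct (BW_R (fun n => fst (u n)) B) as [s1 [Hs1 [l1 Hl1]]].
  { intros n. eapply Rle_trans; [|apply HB]. apply (re_le_Cmod (u n)). }
  destruct (BW_R (fun n => snd (u (s1 n))) B) as [s2 [Hs2 [l2 Hl2]]].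
  { intros n. eapply Rle_trans; [|apply (HB (s1 n))]. apply (im_le_Cmod' (u (s1 n))). }
  exists (fun n => s1 (s2 n)). split. apply strict_comp; auto.
  exists (l1, l2). intros eps He.
  destruct (Hl1 (eps/2)) as [N1 HN1]. lra.
  destruct (Hl2 (eps/2)) as [N2 HN2]. lra.
  exists (Nat.max N1 N2). intros n Hn.
  eapply Rle_lt_trans. apply Cmod_le_parts. simpl.
  pose proof (HN2 n ltac:(lia)). simpl in H.
  pose proof (HN1 (s2 n)). simpl in H0.
  assert (n <= s2 n)%nat by (apply strict_ge; auto).
  specialize (H0 ltac:(lia)).
  replace (fst (u (s1 (s2 n))) + - l1) with (fst (u (s1 (s2 n))) - l1) by ring.
  replace (snd (u (s1 (s2 n))) + - l2) with (snd (u (s1 (s2 n))) - l2) by ring.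
  lra.
Qed.

Fixpoint psi_gen (sel : (nat -> nat) -> nat -> nat -> nat) (k : nat) : nat -> nat :=
  match k with
  | 0%nat => sel (fun n => n) 0%nat
  | S k' => fun n => psi_gen sel k' (sel (psi_gen sel k') (S k') n)
  end.

Lemma psi_strict sel : (forall p k, strict (sel p k)) -> forall k, strict (psi_gen sel k).
Proof.
  intros H k. induction k; simpl. apply H.
  apply strict_comp; auto.
Qed.

Lemma psi_sub sel : (forall p k, strict (sel p k)) ->
  forall d k m, exists s, (m <= s)%nat /\ psi_gen sel (k + d) m = psi_gen sel k s.
Proof.
  intros H d. induction d; intros k m.
  - exists m. rewrite Nat.add_0_r. auto.
  - rewrite Nat.add_succ_r. simpl.
    destruct (IHd k (sel (psi_gen sel (k + d)) (S (k + d)) m)) as [s [Hs1 Hs2]].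
    exists s. split; auto.
    pose proof (strict_ge _ (H (psi_gen sel (k + d)) (S (k + d))) m). lia.
Qed.

Lemma diag (x : nat -> nat -> C) : (forall k, exists B, forall n, Cmod (x n k) <= B) ->
  exists phi, strict phi /\ forall k, exists l, convC (fun n => x (phi n) k) l.
Proof.
  intros Hb.
  assert (Hsig : forall (p : nat -> nat) k,
     {s | strict s /\ exists l, convC (fun n => x (p (s n)) k) l}).
  { intros p k. apply constructive_indefinite_description.
    destruct (Hb k) as [B HB]. apply (BW_C (fun n => x (p n) k) B). auto. }
  set (sel := fun p k => proj1_sig (Hsig p k)).
  assert (Hsel1 : forall p k, strict (sel p k)) by (intros; apply (proj2_sig (Hsig p k))).
  assert (Hsel2 : forall p k, exists l, convC (fun n => x (p (sel p k n)) k) l)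
    by (intros; apply (proj2_sig (Hsig p k))).
  assert (Hpk : forall k, exists l, convC (fun n => x (psi_gen sel k n) k) l).
  { intros [|k]; simpl. apply (Hsel2 (fun n => n) 0%nat). apply Hsel2. }
  exists (fun n => psi_gen sel n n). split.
  - intros n. simpl.
    pose proof (strict_ge _ (Hsel1 (psi_gen sel n) (S n)) (S n)).
    apply strict_mono. apply psi_strict; auto. lia.
  - intros k. destruct (Hpk k) as [l Hl]. exists l. intros eps He.
    destruct (Hl eps He) as [N HN]. exists (Nat.max N k). intros n Hn.
    destruct (psi_sub sel Hsel1 (n - k) k n) as [s [Hs1 Hs2]].
    replace (k + (n - k))%nat with n in Hs2 by lia. rewrite Hs2. apply HN. lia.
Qed.

Lemma C_aux3 (a b c d : C) : (a - b + (c - d))%C = ((a + c) - (b + d))%C.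
Proof. ring. Qed.
Lemma C_aux4 : (RtoC 0) = (RtoC 0 - RtoC 0)%C.
Proof. ring. Qed.

Lemma Cmod_sq_tri (x y : C) : Cmod y ^ 2 <= 2 * Cmod (x - y)%C ^ 2 + 2 * Cmod x ^ 2.
Proof.
  pose proof (Cmod_sq_minus x (x - y)%C).
  replace (x - (x - y))%C with y in H by ring. lra.
Qed.

Lemma sC_minus (f g : nat -> C) n m :
  sum_n_m (fun j => (f j - g j)%C) n m = (sum_n_m f n m - sum_n_m g n m)%C.
Proof.
  destruct (le_lt_dec n m) as [Hnm|Hnm].
  - pattern m. apply (sR_ind _ n); auto.
    + rewrite !sum_n_n. reflexivity.
    + intros m' Hm' IH. rewrite !sum_n_Sm by lia. rewrite IH.
      apply C_aux3.
  - rewrite !sum_n_m_zero by lia. apply C_aux4.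
Qed.

Lemma unif (u : nat -> nat -> C) (l : nat -> C) :
  (forall k, convC (u k) (l k)) ->
  forall K eps, 0 < eps -> exists N, forall n, (N <= n)%nat -> forall k, (k <= K)%nat ->
     Cmod (u k n - l k)%C < eps.
Proof.
  intros H K eps He. induction K.
  - destruct (H 0%nat eps He) as [N HN]. exists N. intros n Hn k Hk.
    assert (k = 0%nat) by lia. subst. auto.
  - destruct IHK as [N1 HN1]. destruct (H (S K) eps He) as [N2 HN2].
    exists (Nat.max N1 N2). intros n Hn k Hk.
    destruct (Nat.eq_dec k (S K)). subst. apply HN2; lia. apply HN1; lia.
Qed.

Lemma lim_of_partial (h : nat -> nat -> C) :
  (forall eps, 0 < eps -> exists N, forall n, (N <= n)%nat -> forall K, sum_n (sq (h n)) K <= eps) ->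
  is_lim_seq (fun n => l2norm (h n)) 0.
Proof.
  intros H. apply is_lim_seq_spec. intros eps.
  destruct (H ((eps/2)^2)) as [N HN]. pose proof (cond_pos eps). nra.
  exists N. intros n Hn. destruct (l2_of_bound (h n) _ (HN n Hn)) as [_ H2].
  rewrite sqrt_pow2 in H2 by (pose proof (cond_pos eps); lra).
  rewrite Rminus_0_r. rewrite Rabs_pos_eq by apply l2norm_nonneg.
  pose proof (cond_pos eps). lra.
Qed.

Lemma sum_n_Cbound (f : nat -> C) M k : (forall j, Cmod (f j) <= M) ->
  Cmod (sum_n f k) <= INR (S k) * M.
Proof.
  intros H. unfold sum_n. eapply Rle_trans. apply sC_norm.
  eapply Rle_trans. apply (sR_le_loc _ (fun _ => M)). intros; auto.
  rewrite sum_n_m_const. rewrite Nat.sub_0_r. lra.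
Qed.

Lemma ii_i alpha (Ha : in_l2 alpha) (HL : Lcal_is_zero alpha) :
  compact_l2_operator (Ralpha alpha).
Proof.
  split. { apply R_l2; auto. }
  intros fs M Hfs.
  assert (HM0 : 0 <= M) by (destruct (Hfs 0%nat) as [_ H]; pose proof (l2norm_nonneg (fs 0%nat)); lra).
  assert (Hpart : forall n K, sum_n (sq (fs n)) K <= M ^ 2).
  { intros n K. destruct (Hfs n) as [H1 H2]. eapply Rle_trans. apply l2_partial; auto.
    pose proof (l2norm_nonneg (fs n)). nra. }
  assert (Hbd : forall k, exists B, forall n, Cmod (sum_n (fs n) k) <= B).
  { intros k. exists (INR (S k) * M). intros n. apply sum_n_Cbound.
    intros j. destruct (Hfs n). eapply Rle_trans. apply Cmod_le_l2; auto. auto. }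
  destruct (diag (fun n k => sum_n (fs n) k) Hbd) as [phi [Hphi Hconv]].
  assert (HG : forall k, {l | convC (fun n => sum_n (fs (phi n)) k) l}).
  { intros k. apply constructive_indefinite_description. apply Hconv. }
  set (G := fun k => proj1_sig (HG k)).
  assert (HGc : forall k, convC (fun n => sum_n (fs (phi n)) k) (G k)) by (intros; apply (proj2_sig (HG k))).
  set (g := fun k => (alpha k * G k)%C).
  set (W0 := W alpha). assert (HW : 0 <= W0) by apply W_nonneg, Ha.
  assert (Hwsum : forall K, sum_n (wt alpha) K <= W0).
  { intros K. apply ser_partial_le; auto. apply wt_nonneg. }
  pose proof (unif (fun k n => sum_n (fs (phi n)) k) G HGc) as Hunif.
  assert (MC : forall eps, 0 < eps -> exists N, forall n, (N <= n)%nat -> forall K,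
     sum_n (sq (fun k => (Ralpha alpha (fs (phi n)) k - g k)%C)) K <= eps).
  { intros eps He.
    set (eta := sqrt (eps / (32 * (M ^ 2 + 1)))).
    assert (Heta2 : eta ^ 2 = eps / (32 * (M ^ 2 + 1))).
    { unfold eta. rewrite pow2_sqrt. auto. apply Rlt_le. apply Rdiv_lt_0_compat; nra. }
    assert (Heta : 0 < eta).
    { unfold eta. apply sqrt_lt_R0. apply Rdiv_lt_0_compat; nra. }
    set (s := sqrt (eps / (52 * (W0 + 1)))).
    assert (Hs2 : s ^ 2 = eps / (52 * (W0 + 1))).
    { unfold s. rewrite pow2_sqrt. auto. apply Rlt_le. apply Rdiv_lt_0_compat; nra. }
    assert (Hs : 0 < s).
    { unfold s. apply sqrt_lt_R0. apply Rdiv_lt_0_compat; nra. }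
    destruct (R_bound alpha Ha HL eta Heta) as [N HN].
    destruct (Hunif N s Hs) as [N1 HN1].
    exists N1. intros n Hn K.
    destruct (Hunif K s Hs) as [N2 HN2].
    set (m := Nat.max N1 N2).
    set (d := fun j => (fs (phi n) j - fs (phi m) j)%C).
    assert (Hd : forall k, sum_n d k = (sum_n (fs (phi n)) k - sum_n (fs (phi m)) k)%C).
    { intros k. unfold sum_n, d. apply sC_minus. }
    assert (Hdpart : forall K', sum_n (sq d) K' <= 4 * M ^ 2).
    { intros K'. eapply Rle_trans.
      apply (sR_le_loc _ (fun j => 2 * sq (fs (phi n)) j + 2 * sq (fs (phi m)) j)).
      intros j _. unfold d, sq. apply Cmod_sq_minus.
      rewrite sR_plus, !sR_mult_l. pose proof (Hpart (phi n) K'). pose proof (Hpart (phi m) K').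
      unfold sum_n in *. lra. }
    pose proof (HN d _ Hdpart K) as HRd.
    assert (Hclose : forall k, (k <= N)%nat ->
       Cmod (sum_n (fs (phi n)) k - sum_n (fs (phi m)) k)%C ^ 2 <= 4 * s ^ 2).
    { intros k Hk. pose proof (HN1 n Hn k Hk). pose proof (HN1 m ltac:(unfold m; lia) k Hk).
      simpl in H, H0.
      replace (sum_n (fs (phi n)) k - sum_n (fs (phi m)) k)%C with
        ((sum_n (fs (phi n)) k - G k) - (sum_n (fs (phi m)) k - G k))%C by ring.
      pose proof (Cmod_sq_minus (sum_n (fs (phi n)) k - G k) (sum_n (fs (phi m)) k - G k)).
      pose proof (Cmod_ge_0 (sum_n (fs (phi n)) k - G k)%C).
      pose proof (Cmod_ge_0 (sum_n (fs (phi m)) k - G k)%C). nra. }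
    assert (Hhead : sum_n (sq (Ralpha alpha d)) N <= 4 * s ^ 2 * W0).
    { eapply Rle_trans. apply (sR_le_loc _ (fun k => 4 * s ^ 2 * wt alpha k)).
      intros k Hk. rewrite sq_R. rewrite Hd. pose proof (Hclose k ltac:(lia)).
      pose proof (wt_nonneg alpha k). nra.
      rewrite sR_mult_l. pose proof (Hwsum N). unfold sum_n in *. nra. }
    assert (HdN : Cmod (sum_n d N) ^ 2 <= 4 * s ^ 2) by (rewrite Hd; apply Hclose; lia).
    assert (Hsec : sum_n (fun k => wt alpha k * Cmod (sum_n (fs (phi m)) k - G k)%C ^ 2) K <= s ^ 2 * W0).
    { eapply Rle_trans. apply (sR_le_loc _ (fun k => s ^ 2 * wt alpha k)).
      intros k Hk. pose proof (HN2 m ltac:(unfold m; lia) k ltac:(lia)). simpl in H.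
      pose proof (Cmod_ge_0 (sum_n (fs (phi m)) k - G k)%C). pose proof (wt_nonneg alpha k).
      assert (Cmod (sum_n (fs (phi m)) k - G k)%C ^ 2 <= s ^ 2) by nra. nra.
      rewrite sR_mult_l. pose proof (Hwsum K). unfold sum_n in *. nra. }
    eapply Rle_trans.
    apply (sR_le_loc _ (fun k => 2 * sq (Ralpha alpha d) k +
                         2 * (wt alpha k * Cmod (sum_n (fs (phi m)) k - G k)%C ^ 2))).
    { intros k _. rewrite sq_R. unfold sq, Ralpha, g.
      replace (alpha k * sum_n (fs (phi n)) k - alpha k * G k)%C with
        (alpha k * (sum_n (fs (phi n)) k - G k))%C by ring.
      rewrite Cmod_mult. rewrite Hd.
      replace (sum_n (fs (phi n)) k - G k)%C with
        ((sum_n (fs (phi n)) k - sum_n (fs (phi m)) k) - - (sum_n (fs (phi m)) k - G k))%C by ring.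
      pose proof (Cmod_sq_minus (sum_n (fs (phi n)) k - sum_n (fs (phi m)) k)
                                (- (sum_n (fs (phi m)) k - G k))%C).
      rewrite Cmod_opp in H. pose proof (wt_nonneg alpha k). unfold wt in *.
      replace ((Cmod (alpha k) * Cmod ((sum_n (fs (phi n)) k - sum_n (fs (phi m)) k) - - (sum_n (fs (phi m)) k - G k))%C) ^ 2)
        with (Cmod (alpha k) ^ 2 * Cmod ((sum_n (fs (phi n)) k - sum_n (fs (phi m)) k) - - (sum_n (fs (phi m)) k - G k))%C ^ 2) by ring.
      nra. }
    rewrite sR_plus, !sR_mult_l. fold (sum_n (sq (Ralpha alpha d)) K).
    fold (sum_n (fun k => wt alpha k * Cmod (sum_n (fs (phi m)) k - G k)%C ^ 2) K).
    assert (16 * eta ^ 2 * M ^ 2 <= eps / 2).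
    { rewrite Heta2.
      assert (M ^ 2 / (M ^ 2 + 1) <= 1) by (apply Rle_div_l; nra).
      apply Rle_trans with (eps / 2 * (M ^ 2 / (M ^ 2 + 1))). right. field. nra. nra. }
    assert (26 * s ^ 2 * W0 <= eps / 2).
    { rewrite Hs2. 
      assert (W0 / (W0 + 1) <= 1) by (apply Rle_div_l; lra).
      apply Rle_trans with (eps / 2 * (W0 / (W0 + 1))). right. field. lra. nra. }
    change (W alpha) with W0 in HRd.
    assert (Cmod (sum_n d N) ^ 2 * W0 <= 4 * s ^ 2 * W0) by (apply Rmult_le_compat_r; auto).
    lra. }
  exists phi, g. split; [exact Hphi|]. split.
  - destruct (MC 1 Rlt_0_1) as [N HN].
    destruct (Hfs (phi N)) as [Hf1 _].
    pose proof (R_l2 alpha Ha HL _ Hf1) as HRf.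
    apply (l2_of_bound g (2 * 1 + 2 * l2norm (Ralpha alpha (fs (phi N))) ^ 2)).
    intros K. eapply Rle_trans.
    apply (sR_le_loc _ (fun k => 2 * sq (fun k => (Ralpha alpha (fs (phi N)) k - g k)%C) k
                               + 2 * sq (Ralpha alpha (fs (phi N))) k)).
    { intros k _. unfold sq.
      pose proof (Cmod_sq_tri (Ralpha alpha (fs (phi N)) k) (g k)). lra. }
    rewrite sR_plus, !sR_mult_l. pose proof (HN N (le_n _) K). pose proof (l2_partial _ HRf K).
    unfold sum_n in *. lra.
  - apply lim_of_partial. exact MC.
Qed.

Lemma supp_sum f n b : supported_in f n b -> forall K, (b <= K)%nat ->
  sum_n_m (sq f) 0 K = sum_n_m (sq f) n b.
Proof.
  intros Hs K HK.
  assert (Hz : forall k, (k < n \/ b < k)%nat -> sq f k = 0).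
  { intros k Hk. unfold sq. rewrite Hs by auto. rewrite Cmod_zero. ring. }
  destruct (le_lt_dec n b) as [Hnb|Hnb].
  2:{ rewrite (sum_n_m_zero _ n b) by lia. apply sR_zero_ext. intros k Hk. apply Hz. lia. }
  assert (sum_n_m (sq f) 0 K = sum_n_m (sq f) 0 b).
  { rewrite (sR_split _ 0 b K) by lia. rewrite (sR_zero_ext _ (S b) K). lra.
    intros; apply Hz; lia. }
  rewrite H. destruct n as [|n']. reflexivity.
  rewrite (sR_split _ 0 n' b) by lia. rewrite sR_zero_ext. lra. intros; apply Hz; lia.
Qed.

Lemma l2_minus (a b : nat -> C) : in_l2 a -> in_l2 b -> in_l2 (fun k => (a k - b k)%C).
Proof.
  intros Ha Hb. apply (l2_of_bound _ (2 * l2norm a ^ 2 + 2 * l2norm b ^ 2)).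
  intros N. eapply Rle_trans.
  apply (sR_le_loc _ (fun k => 2 * sq a k + 2 * sq b k)). intros; apply Cmod_sq_minus.
  rewrite sR_plus, !sR_mult_l. pose proof (l2_partial a Ha N). pose proof (l2_partial b Hb N).
  unfold sum_n in *. lra.
Qed.

Lemma i_ii alpha (Ha : in_l2 alpha) : compact_l2_operator (Ralpha alpha) -> Lcal_is_zero alpha.
Proof.
  intros [Hcomp1 Hcomp2]. apply NNPP. intros Hn. unfold Lcal_is_zero in Hn.
  apply not_all_ex_not in Hn. destruct Hn as [eps Hn].
  apply imply_to_and in Hn. destruct Hn as [He Hn].
  assert (HN : forall N, exists n, (N <= n)%nat /\ ~ Rbar_lt (Lray alpha n) (Finite eps)).
  { intros N. apply NNPP. intros Hc. apply Hn. exists N. intros n Hn'.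
    apply NNPP. intros Hc2. apply Hc. exists n. auto. }
  assert (HP : forall N, exists f : nat -> C, in_l2 f /\ l2norm f <= 1 /\
            (forall j, (j < N)%nat -> f j = RtoC 0) /\
            exists b, eps ^ 2 / 16 < sum_n (sq (Ralpha alpha f)) b).
  { intros N. destruct (HN N) as [n [Hn1 Hn2]].
    destruct (Lray_big alpha n eps (eps/2) Hn2 ltac:(lra)) as [b [Hb1 Hb2]].
    destruct (LI_lower alpha n b (eps/2) ltac:(lra) Hb2) as [Hmu [f [Hs [Hnorm Hl]]]].
    exists f. 
    assert (Hsum1 : sum_n_m (sq f) n b <= 1).
    { rewrite <- norm2I_sq. assert (0 <= norm2I f n b) by apply sqrt_pos. nra. }
    destruct (l2_of_bound f 1) as [Hl2 Hl2n].
    { intros K. unfold sum_n. eapply Rle_trans.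
      apply (sR_sub _ 0 (K + b) 0 K); try lia. intros; apply sq_nn.
      rewrite (supp_sum f n b Hs) by lia. auto. }
    rewrite sqrt_1 in Hl2n.
    split; auto. split; auto. split.
    { intros j Hj. apply Hs. lia. }
    exists b.
    pose proof (lIf_upper alpha n b f 0 ltac:(lia)) as Hup.
    pose proof (mu_nonneg alpha n b). assert (Hmup : 0 < mu alpha n b) by lra.
    apply Rlt_div_r in Hl; auto.
    set (X := sum_n_m (fun k => wt alpha k * Cmod (sum_n_m f 0 k) ^ 2) n b) in *.
    assert (HX : eps ^ 2 / 16 < X).
    { assert ((eps / 2) ^ 2 * mu alpha n b < 4 * mu alpha n b * X) by lra.
      assert (eps ^ 2 / 16 * (4 * mu alpha n b) < X * (4 * mu alpha n b)) by nra.
      apply Rmult_lt_reg_r in H1; lra. }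
    eapply Rlt_le_trans. exact HX. unfold sum_n.
    unfold X. rewrite (sR_ext_loc (fun k => wt alpha k * Cmod (sum_n_m f 0 k) ^ 2) (sq (Ralpha alpha f)) n b).
    apply sR_sub; try lia. intros; apply sq_nn.
    intros k _. rewrite sq_R. reflexivity. }
  assert (HPs : forall N, {f | in_l2 f /\ l2norm f <= 1 /\
            (forall j, (j < N)%nat -> f j = RtoC 0) /\
            exists b, eps ^ 2 / 16 < sum_n (sq (Ralpha alpha f)) b}).
  { intros N. apply constructive_indefinite_description. apply HP. }
  set (fs := fun N => proj1_sig (HPs N)).
  assert (Hfs : forall N, in_l2 (fs N) /\ l2norm (fs N) <= 1 /\
            (forall j, (j < N)%nat -> fs N j = RtoC 0) /\
            exists b, eps ^ 2 / 16 < sum_n (sq (Ralpha alpha (fs N))) b).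
  { intros N. apply (proj2_sig (HPs N)). }
  destruct (Hcomp2 fs 1) as [phi [g [Hphi [Hg Hlim]]]].
  { intros n. destruct (Hfs n) as [H1 [H2 _]]. auto. }
  assert (Hphi' : strict phi) by exact Hphi.
  assert (HRl2 : forall n, in_l2 (Ralpha alpha (fs n))).
  { intros n. apply Hcomp1. apply Hfs. }
  apply is_lim_seq_spec in Hlim.
  assert (Hzero : forall n k, (k < n)%nat -> Ralpha alpha (fs (phi n)) k = RtoC 0).
  { intros n k Hk. unfold Ralpha. unfold sum_n. rewrite sC_zero_ext. ring.
    intros j Hj. destruct (Hfs (phi n)) as [_ [_ [H3 _]]]. apply H3.
    pose proof (strict_ge phi Hphi' n). lia. }
  assert (Hg0 : forall k, g k = RtoC 0).
  { intros k. apply NNPP. intros Hgk.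
    assert (Hpos : 0 < Cmod (g k)).
    { pose proof (Cmod_ge_0 (g k)). destruct H; auto. symmetry in H. apply Cmod_eq_0 in H. contradiction. }
    destruct (Hlim (mkposreal _ Hpos)) as [N HN']. simpl in HN'.
    set (n := Nat.max N (S k)).
    specialize (HN' n ltac:(unfold n; lia)). rewrite Rminus_0_r in HN'.
    rewrite Rabs_pos_eq in HN' by apply l2norm_nonneg.
    pose proof (Cmod_le_l2 _ k (l2_minus _ _ (HRl2 (phi n)) Hg)). simpl in H.
    rewrite Hzero in H by (unfold n; lia).
    replace (RtoC 0 - g k)%C with (- g k)%C in H by ring. rewrite Cmod_opp in H. lra. }
  assert (Heps4 : 0 < eps / 4) by lra.
  destruct (Hlim (mkposreal _ Heps4)) as [N HN']. simpl in HN'.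
  specialize (HN' N (le_n _)). rewrite Rminus_0_r in HN'.
  rewrite Rabs_pos_eq in HN' by apply l2norm_nonneg.
  assert (Heq : l2norm (fun k => (Ralpha alpha (fs (phi N)) k - g k)%C) = l2norm (Ralpha alpha (fs (phi N)))).
  { unfold l2norm. f_equal. apply Series_ext. intros k. rewrite Hg0.
    replace (Ralpha alpha (fs (phi N)) k - RtoC 0)%C with (Ralpha alpha (fs (phi N)) k) by ring.
    reflexivity. }
  rewrite Heq in HN'.
  destruct (Hfs (phi N)) as [_ [_ [_ [b Hb]]]].
  pose proof (l2_partial _ (HRl2 (phi N)) b).
  pose proof (l2norm_nonneg (Ralpha alpha (fs (phi N)))).
  assert (l2norm (Ralpha alpha (fs (phi N))) ^ 2 < (eps / 4) ^ 2).
  { nra. }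
  lra.
Qed.

Lemma ii_iii alpha : Lcal_is_zero alpha ->
  forall eps : R, 0 < eps -> forall c : nat -> option nat, is_eps_L_sequence alpha eps c ->
    has_finite_length c.
Proof.
  intros HL eps He c [Hc0 Hstep].
  destruct (HL eps He) as [N HN].
  assert (C1 : forall k m, c k = Some m -> (k <= m)%nat).
  { induction k; intros m Hm. lia.
    specialize (Hstep k). destruct (c k) as [m'|] eqn:E.
    - rewrite Hm in Hstep. destruct Hstep as [[Ht _] _]. specialize (IHk m' eq_refl). lia.
    - congruence. }
  assert (C2 : forall k, c k <> None \/ has_finite_length c).
  { induction k. left. congruence.
    destruct IHk as [H|H]; auto.
    destruct (c (S k)) eqn:E. left; congruence. right. exists k. auto. }
  assert (C3 : forall k m, c k = Some m -> (N <= m)%nat -> c (S k) = None).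
  { intros k m Hk Hm. specialize (Hstep k). rewrite Hk in Hstep.
    destruct (c (S k)) as [t|] eqn:E; auto.
    destruct Hstep as [[Ht HLI] _].
    pose proof (Lray_lt alpha m eps (HN m Hm) (t - 1) ltac:(lia)). lra. }
  destruct (C2 N) as [H|H]; auto.
  destruct (c N) as [m|] eqn:E; [|congruence].
  exists N. split. congruence. apply (C3 N m E). apply (C1 N m E).
Qed.

Lemma lIf_ext' alpha a b f g : (forall j, (S a <= j <= b)%nat -> f j = g j) ->
  lIf alpha a b f = lIf alpha a b g.
Proof.
  intros H. rewrite !lIf_Tt. apply sR_ext_loc. intros k Hk.
  apply sR_ext_loc. intros n Hn. unfold Tt.
  rewrite (sum_n_m_ext_loc f g); auto.
  intros j Hj. apply H. split; [|lia].
  assert (Nat.min k n >= a)%nat by lia. lia.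
Qed.

Lemma LI_extend alpha c n b e : (c <= n)%nat -> 0 <= e -> e < LI alpha n b ->
  e / 2 < LI alpha c b.
Proof.
  intros Hcn He HL.
  destruct (LI_lower alpha n b e He HL) as [Hmu [f [Hs [Hnorm Hl]]]].
  assert (Hnb : (n <= b)%nat).
  { destruct (le_lt_dec n b); auto. exfalso. unfold mu in Hmu. rewrite sum_n_m_zero in Hmu by lia.
    apply Hmu. reflexivity. }
  set (B := mu alpha n b) in *.
  assert (HB : 0 < B) by (pose proof (mu_nonneg alpha n b); unfold B in *; lra).
  set (g := fun j => if Nat.eqb j n then RtoC 0 else f j).
  assert (Hgf : forall j, (S n <= j)%nat -> g j = f j).
  { intros j Hj. unfold g. destruct (Nat.eqb_spec j n). lia. auto. }
  assert (Hgs : supported_in g c b).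
  { intros j Hj. unfold g. destruct (Nat.eqb_spec j n). auto. apply Hs. lia. }
  assert (Hgs' : supported_in g n b).
  { intros j Hj. unfold g. destruct (Nat.eqb_spec j n). auto. apply Hs. lia. }
  assert (Hgn : norm2I g c b <= 1).
  { assert (sum_n_m (sq f) n b <= 1).
    { rewrite <- norm2I_sq. assert (0 <= norm2I f n b) by apply sqrt_pos. nra. }
    assert (sum_n_m (sq g) c b <= 1).
    { eapply Rle_trans. apply (sR_sub _ 0 b c b); try lia. intros; apply sq_nn.
      rewrite (supp_sum g n b Hgs' b) by lia.
      eapply Rle_trans; [|exact H]. apply sR_le_loc. intros j Hj. unfold sq, g.
      destruct (Nat.eqb j n). rewrite Cmod_zero. pose proof (sq_nonneg (f j)). simpl in *. lra.
      lra. }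
    unfold norm2I. rewrite <- sqrt_1. apply sqrt_le_1_alt. exact H0. }
  set (l' := lIf alpha n b f) in *.
  set (L := lIf alpha c b g).
  set (S0 := sum_n_m (fun k => wt alpha k * Cmod (sum_n_m g (S n) k) ^ 2) (S n) b).
  assert (HS0 : 0 <= S0).
  { apply sR_nonneg. intros. pose proof (wt_nonneg alpha k). pose proof (sq_nonneg (sum_n_m g (S n) k)). nra. }
  assert (H1 : l' <= L).
  { unfold L, l'. rewrite <- (lIf_ext' alpha n b g f). apply lIf_sub; auto.
    intros j Hj. apply Hgf. lia. }
  set (A := mu alpha c n).
  assert (HA : 0 <= A) by apply mu_nonneg.
  assert (H2 : 2 * A * S0 <= L).
  { apply lIf_cross; auto. intros j Hj. unfold g. destruct (Nat.eqb_spec j n). auto. apply Hs. lia. }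
  assert (H3 : l' <= 4 * B * S0).
  { unfold l'. eapply Rle_trans. apply (lIf_upper alpha n b f (S n)); lia.
    unfold B. apply Rmult_le_compat_l. pose proof (mu_nonneg alpha n b); lra.
    rewrite (sR_split _ n n b) by lia. rewrite sum_n_n. rewrite (sum_n_m_zero f (S n) n) by lia.
    assert (Cmod (@zero C_AbelianMonoid) = 0) by apply Cmod_zero.
    rewrite H. unfold S0. apply Req_le.
    rewrite (sR_ext_loc (fun k => wt alpha k * Cmod (sum_n_m f (S n) k) ^ 2)
                        (fun k => wt alpha k * Cmod (sum_n_m g (S n) k) ^ 2)). ring.
    intros k Hk. rewrite (sum_n_m_ext_loc f g); auto. intros; symmetry; apply Hgf; lia. }
  assert (Hm : mu alpha c b <= A + B).
  { unfold A, B, mu. rewrite (sR_split _ c n b) by lia.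
    apply Rplus_le_compat_l. apply sR_sub; try lia. intros; apply sq_nonneg. }
  assert (HmB : B <= mu alpha c b).
  { unfold B, mu. apply sR_sub; try lia. intros; apply sq_nonneg. }
  assert (Hmu' : mu alpha c b <> 0) by lra.
  pose proof (LI_ge alpha c b g Hmu' Hgs Hgn) as HLI.
  fold L in HLI.
  apply Rlt_div_r in Hl; auto. fold B in Hl.
  set (m := mu alpha c b) in *.
  assert (HLm : e ^ 2 / 4 * m < L).
  { destruct (Rle_lt_dec A B).
    - assert (e ^ 2 * B <= L) by lra.
      assert (0 <= e ^ 2) by nra.
      assert (e ^ 2 * m <= e ^ 2 * (2 * B)) by (apply Rmult_le_compat_l; lra).
      assert (e ^ 2 / 4 * m <= e ^ 2 / 2 * B) by lra.
      assert (0 <= e ^ 2 * B) by nra. lra.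
    - assert (HS : e ^ 2 / 4 < S0).
      { assert (e ^ 2 * B < 4 * S0 * B) by lra. 
        assert (e ^ 2 < 4 * S0) by (apply Rmult_lt_reg_r with B; lra). lra. }
      assert (0 < A) by lra.
      assert (2 * A * (e ^ 2 / 4) < 2 * A * S0) by (apply Rmult_lt_compat_l; lra).
      assert (0 <= e ^ 2) by nra.
      assert (e ^ 2 / 4 * m <= e ^ 2 / 4 * (2 * A)) by (apply Rmult_le_compat_l; lra).
      lra. }
  assert (Hmp : 0 < m) by lra.
  assert (e ^ 2 / 4 < L / m).
  { apply (Rlt_div_r _ _ _ Hmp). lra. }
  assert ((e / 2) ^ 2 < LI alpha c b ^ 2) by (unfold Rdiv in *; nra).
  pose proof (LI_nonneg alpha c b).
  apply Rnot_le_lt. intros Hc. assert (LI alpha c b ^ 2 <= (e/2) ^ 2).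
  { apply pow_incr. split; auto. }
  lra.
Qed.

Lemma exists_least (P : nat -> Prop) : (exists t, P t) -> exists t, P t /\ forall t', P t' -> (t <= t')%nat.
Proof.
  intros [t Ht]. apply NNPP. intros Hno.
  assert (forall n k, (k <= n)%nat -> ~ P k).
  { induction n; intros k Hk HPk.
    - assert (k = 0%nat) by lia. subst. apply Hno. exists 0%nat. split; auto. intros; lia.
    - destruct (Nat.eq_dec k (S n)). 2:{ apply (IHn k); auto; lia. }
      subst. apply Hno. exists (S n). split; auto. intros t' Ht'.
      destruct (le_lt_dec (S n) t'); auto. exfalso. apply (IHn t'); auto; lia. }
  apply (H t t); auto.
Qed.

Fixpoint cseq (h : nat -> nat) (k : nat) : nat :=
  match k with 0%nat => 0%nat | S k' => h (cseq h k') end.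

Lemma iii_ii alpha :
  (forall eps : R, 0 < eps -> forall c : nat -> option nat, is_eps_L_sequence alpha eps c ->
      has_finite_length c) -> Lcal_is_zero alpha.
Proof.
  intros H3. apply NNPP. intros Hn. unfold Lcal_is_zero in Hn.
  apply not_all_ex_not in Hn. destruct Hn as [eps Hn].
  apply imply_to_and in Hn. destruct Hn as [He Hn].
  assert (HN : forall N, exists n, (N <= n)%nat /\ ~ Rbar_lt (Lray alpha n) (Finite eps)).
  { intros N. apply NNPP. intros Hc. apply Hn. exists N. intros n Hn'.
    apply NNPP. intros Hc2. apply Hc. exists n. auto. }
  set (P := fun m t => (m < t)%nat /\ LI alpha m (t - 1) > eps / 4).
  assert (HP : forall m, exists t, P m t /\ forall t', P m t' -> (t <= t')%nat).
  { intros m. apply exists_least.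
    destruct (HN m) as [n [Hn1 Hn2]].
    destruct (Lray_big alpha n eps (eps/2) Hn2 ltac:(lra)) as [b [Hb1 Hb2]].
    exists (S b). unfold P. split. lia. replace (S b - 1)%nat with b by lia.
    pose proof (LI_extend alpha m n b (eps/2) Hn1 ltac:(lra) Hb2). lra. }
  assert (Hh : forall m, {t | P m t /\ forall t', P m t' -> (t <= t')%nat}).
  { intros m. apply constructive_indefinite_description. apply HP. }
  set (h := fun m => proj1_sig (Hh m)).
  set (c := fun k => Some (cseq h k)).
  assert (Hspec : is_eps_L_sequence alpha (eps / 4) c).
  { split. reflexivity. intros k. simpl. exact (proj2_sig (Hh (cseq h k))). }
  destruct (H3 (eps/4) ltac:(lra) c Hspec) as [N [_ HN']]. unfold c in HN'. discriminate.
Qed.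

Theorem theorem4p6 (alpha : nat -> C) (Halpha : in_l2 alpha) :
  (compact_l2_operator (Ralpha alpha) <-> Lcal_is_zero alpha) /\
  (Lcal_is_zero alpha <->
     (forall eps : R, 0 < eps ->
        forall c : nat -> option nat, is_eps_L_sequence alpha eps c ->
          has_finite_length c)).
Proof.
  split; split.
  - apply i_ii; auto.
  - apply ii_i; auto.
  - apply ii_iii.
  - apply iii_ii.
Qed.
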